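(* For any $h,v$ with $hv\ge n^2$, there is an $[h,v]$-scheme for \textsc{TriangleCount-Adj} on $n$-vertex graphs.
   Context: Annotated streaming model (schemes): a space-bounded Verifier reads an input stream $\sigma$; after the stream ends, an all-powerful Prover sends a help message to the Verifier as a stream. A scheme for a function $f$ consists of the Verifier's randomized streaming algorithm, the honest Prover's help function, and the Verifier's output procedure, outputting a value in $\mathrm{range}(f)\cup\{\bot\}$ ($\bot$ = reject), with perfect completeness (honest help makes the Verifier output $f(\sigma)$ with probability 1) and soundness error at most $1/3$ (for every $\sigma$ and every help message, the probability of outputting a value outside $\{f(\sigma),\bot\}$ is at most $1/3$). An $[h,v]$-scheme uses $\tilde{O}(h)$ bits of help and $\tilde{O}(v)$ bits of Verifier space, where $\tilde{O}$ hides factors polynomial in $\log n$. \textsc{TriangleCount-Adj}: the input is a graph on vertex set $[n]$ given in the adjacency-list (vertex-arrival) streaming model, where for each vertex $v$ the stream presents its full neighbor list $N(v)$ contiguously (vertices appear in some order, each with its neighbor list). The desired output is the number of triangles in the graph. *)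

(* Defs.v *)
From mathcomp Require Import all_boot.
Set Implicit Arguments. Unset Strict Implicit. Unset Printing Implicit Defensive.

Definition simple_graph (n : nat) (g : rel 'I_n) : Prop :=
  (forall x y, g x y = g y x) /\ (forall x, g x x = false).

Definition triangle_count (n : nat) (g : rel 'I_n) : nat :=
  #|[set t : {set 'I_n} | (#|t| == 3) &&
       [forall x in t, forall y in t, (x != y) ==> g x y]]|.

(* A stream token (u, w) means "w is in the neighbour list N(u)" (O(log n) bits). *)
Definition token (n : nat) := ('I_n * 'I_n)%type.

Definition adj_stream (n : nat) (g : rel 'I_n) (sigma : seq (token n)) : Prop :=
  exists blocks : seq ('I_n * seq 'I_n),
    [/\ perm_eq (map fst blocks) (enum 'I_n),
        (forall b, b \in blocks -> uniq b.2 /\ (forall w, (w \in b.2) = g b.1 w))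
      & sigma = flatten [seq [seq (b.1, w) | w <- b.2] | b <- blocks]].

(* A randomized streaming verifier with memory of vbits bits: its memory states
   are 'I_(2^vbits).  It tosses vbits random coins (seed r, uniform), stores
   them in memory (initial state vinit r), processes the input stream with
   vstep, then the help stream (bits) with vhelp, and outputs vout
   (None = reject, i.e. bottom). *)
Record verifier (n : nat) := Verifier {
  vbits : nat;
  vinit : 'I_(2 ^ vbits) -> 'I_(2 ^ vbits);
  vstep : 'I_(2 ^ vbits) -> token n -> 'I_(2 ^ vbits);
  vhelp : 'I_(2 ^ vbits) -> bool -> 'I_(2 ^ vbits);
  vout  : 'I_(2 ^ vbits) -> option nat }.
Arguments vbits {n} v.
Arguments vinit {n} v _.
Arguments vstep {n} v _ _.
Arguments vhelp {n} v _ _.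
Arguments vout {n} v _.

Definition run (n : nat) (V : verifier n) (r : 'I_(2 ^ vbits V))
    (sigma : seq (token n)) (help : seq bool) : option nat :=
  vout V (foldl (vhelp V) (foldl (vstep V) (vinit V r) sigma) help).

Arguments run {n} V r sigma help.

(* Scheme for TriangleCount-Adj on n-vertex graphs with honest prover P:
   perfect completeness and soundness error at most 1/3. *)
Definition tc_scheme (n : nat) (V : verifier n)
    (P : seq (token n) -> seq bool) : Prop :=
  (forall g sigma, simple_graph g -> adj_stream g sigma ->
     forall r, run V r sigma (P sigma) = Some (triangle_count g))
  /\
  (forall g sigma, simple_graph g -> adj_stream g sigma ->
     forall help : seq bool,
       3 * #|[set r : 'I_(2 ^ vbits V) |
               (run V r sigma help != None) &&
               (run V r sigma help != Some (triangle_count g))]|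
       <= 2 ^ vbits V).

(* log factor used for O~ : floor(log2 n) + 1 (>= 1). *)
Definition logf (n : nat) : nat := (trunc_log 2 n).+1.

(* Main.v *)
From HB Require Import structures.
Require Import Defs.
From mathcomp Require Import all_boot all_algebra zify.
From Stdlib Require Import FunctionalExtensionality.
Set Implicit Arguments. Unset Strict Implicit. Unset Printing Implicit Defensive.


Lemma logn_fact_ext p n K : prime p -> n <= K ->
  logn p n`! = \sum_(1 <= k < K.+1) n %/ p ^ k.
Proof.
move=> pp nK; rewrite logn_fact //.
rewrite (@big_cat_nat _ _ _ n.+1 1 K.+1) //=.
rewrite [X in _ + X]big1_seq ?addn0 // => k /andP[_]; rewrite mem_index_iota.
case/andP=> nk _; apply/divn_small.
apply: (leq_trans nk); apply: ltnW; apply: ltn_expl; exact: prime_gt1.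
Qed.

Lemma sum_le_cnt t K : \sum_(1 <= k < K.+1) (k <= t) = minn K t.
Proof.
elim: K => [|K IH]; first by rewrite big_nil; lia.
rewrite big_nat_recr //= IH; case: (leqP K.+1 t) => H; lia.
Qed.

Lemma logn_bin q M : prime q -> 0 < M -> q ^ logn q 'C(M.*2, M) <= M.*2.
Proof.
move=> pq M0; have q1 := prime_gt1 pq.
rewrite -addnn.
have hC := bin_fact (leq_addl M M); rewrite addnK in hC.
have Cpos : 0 < 'C(M + M, M) by rewrite bin_gt0 leq_addl.
have fpos : forall m, 0 < m`! := fact_gt0.
set t := trunc_log q (M + M).
have ht : q ^ t <= M + M by apply: trunc_logP => //; lia.
have htl : M + M < q ^ t.+1 by apply: trunc_log_ltn.
suff le_t : logn q 'C(M + M, M) <= t.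
  apply: leq_trans ht; apply: leq_pexp2l => //; lia.
have E := congr1 (logn q) hC.
rewrite !lognM ?muln_gt0 ?fpos // in E.
rewrite (@logn_fact_ext q (M + M) (M + M)) // (@logn_fact_ext q M (M + M)) // in E; last by lia.
have key : \sum_(1 <= k < (M + M).+1) (M + M) %/ q ^ k <=
   \sum_(1 <= k < (M + M).+1) (M %/ q ^ k + M %/ q ^ k + (k <= t)).
  apply: leq_sum => k _.
  case: (leqP k t) => hk.
    have qk : 0 < q ^ k by rewrite expn_gt0; lia.
    move: (q ^ k) qk => d d0; rewrite addn1.
    have e1 := divn_eq M d; have e2 := ltn_pmod M d0.
    have e3 := divn_eq (M + M) d; have e4 := ltn_pmod (M + M) d0.
    nia.
  rewrite divn_small //; apply: (leq_trans htl).
  by apply: leq_pexp2l; lia.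
rewrite !big_split /= sum_le_cnt -E in key.
lia.
Qed.

Lemma bin_lb M : 2 ^ M <= 'C(M.*2, M).
Proof.
elim: M => [|M IH] //.
rewrite doubleS binS expnS.
have h1 : 'C(M.*2, M) <= 'C(M.*2.+1, M.+1) by rewrite binS; lia.
have h2 : 'C(M.*2, M) <= 'C(M.*2.+1, M).
  case: M {IH h1} => [|m] //; rewrite binS; lia.
lia.
Qed.

Lemma prod_if_le N X K : 0 < X ->
  \prod_(0 <= q < K) (if q <= N then X else 1) <= X ^ N.+1.
Proof.
move=> X0.
have -> : \prod_(0 <= q < K) (if q <= N then X else 1) = X ^ (minn K N.+1).
  elim: K => [|K IH]; first by rewrite big_nil.
  rewrite big_nat_recr //= IH; case: (leqP K N) => H.
    by rewrite -expnSr; congr (_ ^ _); lia.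
  by rewrite muln1; congr (_ ^ _); lia.
by apply: leq_pexp2l => //; lia.
Qed.

Lemma ineq_s s : 2 <= s -> (3 * s + 1) * (2 ^ s + 1) < 2 ^ (3 * s).
Proof.
elim: s => [|s IH] // hs.
case: (ltnP s 2) => hs2.
  have -> : s = 1 by lia.
  by [].
have := IH hs2.
have -> : 3 * s.+1 = (3 * s).+3 by lia.
rewrite !expnS.
move: (2 ^ s) (2 ^ (3 * s)) => X Y; lia.
Qed.

Lemma prime_between s : 2 <= s -> exists2 p, prime p & 2 ^ s < p <= 2 ^ (3 * s).+1.
Proof.
move=> hs.
set N := 2 ^ s; set M := 2 ^ (3 * s).
have M0 : 0 < M by rewrite expn_gt0.
have -> : 2 ^ (3 * s).+1 = M.*2 by rewrite expnS; lia.
case: (boolP (has (fun p => prime p && (N < p <= M.*2)) (iota 0 (M.*2).+1))).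
  case/hasP=> p _ /andP[pp hp]; by exists p.
move/hasPn=> hno.
have nop : forall q, prime q -> N < q -> M.*2 < q.
  move=> q pq Nq; case: (leqP q M.*2) => // qM.
  by have := hno q; rewrite mem_iota add0n ltnS qM pq Nq /= => /(_ isT).
set C := 'C(M.*2, M).
have Cpos : 0 < C by rewrite bin_gt0 -addnn leq_addl.
have hup : C <= (M.*2) ^ N.+1.
  rewrite -{1}(partnT Cpos) /partn.
  apply: (leq_trans _ (@prod_if_le N (M.*2) C.+1 _)); last by lia.
  apply: leq_prod => q _.
  case: (posnP (logn q C)) => [->|lpos]; first by case: ifP => _; lia.
  have : q \in primes C by rewrite -logn_gt0.
  rewrite mem_primes => /and3P[pq _ _].
  have hb := logn_bin pq M0.
  case: ifP => // qN.
  have qN' : N < q by rewrite ltnNge qN.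
  have := nop q pq qN'; rewrite ltnNge => /negP; case.
  apply: leq_trans hb; rewrite -{1}(expn1 q); apply: leq_pexp2l => //.
  exact: prime_gt0.
have hlo := bin_lb M.
have : 2 ^ M <= 2 ^ ((3 * s).+1 * N.+1).
  apply: (leq_trans hlo); apply: (leq_trans hup).
  have -> : M.*2 = 2 ^ (3 * s).+1 by rewrite expnS; lia.
  by rewrite -expnM.
rewrite leq_exp2l // => H.
have := ineq_s hs; rewrite -/N -/M; lia.
Qed.


Lemma sum_pred_card (T : finType) (P : pred T) : \sum_(z : T) (P z : nat) = #|P|.
Proof.
rewrite -sum1_card [in RHS]big_mkcond /=; apply: eq_bigr => z _; rewrite unfold_in; by case: (P z).
Qed.

Lemma card3 (T : finType) (u w z : T) : u != w -> u != z -> w != z ->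
  #|[set u; w; z]| = 3.
Proof.
move=> uw uz wz; rewrite setUC cardsU1 cards2 uw !inE negb_or.
by rewrite (eq_sym z u) uz (eq_sym z w) wz.
Qed.

Lemma tri6 n (g : rel 'I_n) : simple_graph g ->
  \sum_(u : 'I_n) \sum_(w : 'I_n) \sum_(z : 'I_n) ((g u w && g z u && g z w) : nat)
  = 6 * triangle_count g.
Proof.
case=> gs girr.
rewrite /triangle_count.
set Tri := [set t : {set 'I_n} | _].
have neq : forall x y, g x y -> x != y.
  by move=> x y gxy; apply/eqP => exy; rewrite exy girr in gxy.
have inner : forall t, t \in Tri ->
   \sum_u \sum_w \sum_z (((g u w && g z u && g z w) && ([set u; w; z] == t)) : nat) = 6.
  move=> t; rewrite inE => /andP[/eqP ct /forallP ht].
  have step : forall u w z, ((g u w && g z u && g z w) && ([set u; w; z] == t)) =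
     [&& u \in t, w \in t :\ u & z \in t :\ u :\ w].
    move=> u w z; apply/idP/idP.
      case/andP=> /andP[/andP[guw gzu] gzw] /eqP <-.
      rewrite !inE !eqxx /= !orbT /= andbT.
      by rewrite eq_sym (neq _ _ gzu) eq_sym (neq _ _ gzw) (eq_sym w) (neq _ _ guw).
    case/and3P=> ut; rewrite !inE => /andP[wu wt] /and3P[zw zu zt].
    have e : [set u; w; z] = t.
      apply/eqP; rewrite eqEcard ct.
      have -> : #|[set u; w; z]| = 3.
        by rewrite card3 // eq_sym.
      rewrite leqnn andbT; apply/subsetP => x; rewrite !inE.
      by case/orP => [/orP[]|] /eqP ->.
    rewrite e eqxx andbT.
    have G : forall x y, x \in t -> y \in t -> x != y -> g x y.
      move=> x y xt yt xy; have := ht x; rewrite xt /= => /forallP /(_ y).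
      by rewrite yt xy.
    by rewrite !G // eq_sym.
  under eq_bigr => u _ do under eq_bigr => w _ do under eq_bigr => z _ do rewrite step.
  have e2 : forall u w, \sum_z ([&& u \in t, w \in t :\ u & z \in t :\ u :\ w] : nat) =
      (u \in t) * (w \in t :\ u) * #|t :\ u :\ w|.
    move=> u w; rewrite -(sum_pred_card (mem (t :\ u :\ w))) big_distrr /=; apply: eq_bigr => z _.
    by case: (u \in t); case: (w \in t :\ u); rewrite /= ?mul0n ?mul1n.
  under eq_bigr => u _ do under eq_bigr => w _ do rewrite e2.
  have e3 : forall u, \sum_w ((u \in t) * (w \in t :\ u) * #|t :\ u :\ w|) = (u \in t) * 2.
    move=> u; case: (boolP (u \in t)) => ut; last by rewrite big1 //; lia.
    have cu : #|t :\ u| = 2 by have := cardsD1 u t; rewrite ut ct; lia.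
    rewrite mul1n -cu -sum1_card [in RHS]big_mkcond /=; apply: eq_bigr => w _.
    case: (boolP (w \in t :\ u)) => wt //=.
    by rewrite /= !mul1n; have := cardsD1 w (t :\ u); rewrite wt cu add1n => -[<-].
  under eq_bigr => u _ do rewrite e3.
  by rewrite -big_distrl /= sum_pred_card -/(card (mem t)) ct.
have split : forall u w z, ((g u w && g z u && g z w) : nat) =
    \sum_(t in Tri) (((g u w && g z u && g z w) && ([set u; w; z] == t)) : nat).
  move=> u w z; case: (boolP (g u w && g z u && g z w)) => h /=; last by rewrite big1.
  have mem : [set u; w; z] \in Tri.
    move: h => /andP[/andP[guw gzu] gzw].
    rewrite inE; apply/andP; split.
      rewrite card3 ?eqxx //; [exact: neq | rewrite eq_sym; exact: neq | rewrite eq_sym; exact: neq].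
    apply/forallP => x; apply/implyP => xin; apply/forallP => y; apply/implyP => yin.
    apply/implyP; move: xin yin; rewrite !inE.
    case/orP => [/orP[]|] /eqP ->; case/orP => [/orP[]|] /eqP -> //; rewrite ?eqxx //= => _;
      by rewrite ?guw ?gzu ?gzw // gs ?guw ?gzu ?gzw.
  rewrite (bigD1 [set u; w; z]) //= eqxx big1 // => t /andP[_].
  by rewrite eq_sym => /negbTE ->.
under eq_bigr => u _ do under eq_bigr => w _ do under eq_bigr => z _ do rewrite split.
under eq_bigr => u _ do under eq_bigr => w _ do rewrite exchange_big.
under eq_bigr => u _ do rewrite exchange_big.
rewrite exchange_big /=.
rewrite (eq_bigr (fun _ => 6)); last by move=> t tT; rewrite -(inner t tT).
by rewrite sum_nat_const mulnC.
Qed.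

Lemma tri_le n (g : rel 'I_n) : simple_graph g -> 6 * triangle_count g <= n ^ 3.
Proof.
move=> sg; rewrite -(tri6 sg).
apply: (@leq_trans (\sum_(u : 'I_n) \sum_(w : 'I_n) \sum_(z : 'I_n) 1)).
  apply: leq_sum => u _; apply: leq_sum => w _; apply: leq_sum => z _.
  by case: (_ && _).
by rewrite !big_const_ord !iter_addn_0 mul1n; lia.
Qed.

Lemma exp_mono m1 m2 e : m1 <= m2 -> m1 ^ e <= m2 ^ e.
Proof. move=> h; elim: e => // e IH; rewrite !expnS; exact: leq_mul. Qed.

Lemma HH_bound n h v : 0 < n -> n * n <= h * v ->
  (n %/ minn v n + 1) * (n %/ minn (v %/ minn v n) n + 1) <= 4 * h.
Proof.
move=> n0 hnv.
have v0 : 0 < v by case: v hnv => //; rewrite muln0; lia.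
case: (leqP v n) => hvn.
  rewrite divnn v0 /= (_ : minn 1 n = 1); last by apply/minn_idPl.
  rewrite divn1.
  set q := n %/ v.
  have hq1 : q * v <= n by rewrite /q leq_divM.
  have hq0 : 0 < q by rewrite /q divn_gt0.
  have : q * n * v <= h * v by apply: leq_trans hnv; nia.
  rewrite leq_pmul2r // => hqn.
  nia.
rewrite divnn n0 /=.
case: (leqP n (v %/ n)) => hb.
  rewrite divnn n0 /=.
  have : 0 < h by case: h hnv => //; rewrite mul0n; lia.
  lia.
set q := v %/ n.
have q0 : 0 < q by rewrite /q divn_gt0 // ltnW.
have hv : v < q * n + n by rewrite /q; have := ltn_ceil v n0; lia.
set t := n %/ q.
have ht : t * q <= n by rewrite /t leq_divM.
have t0 : 0 < t by rewrite /t divn_gt0 // ltnW.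
have : n * n < h * (q * n + n) by apply: (leq_ltn_trans hnv); rewrite ltn_pmul2l //; case: h hnv => //; rewrite mul0n; lia.
have e : h * (q * n + n) = (h * (q + 1)) * n by rewrite -mulnA mulnDl mul1n.
rewrite e ltn_pmul2r // => hn.
have : t * q < h * (q + 1) by apply: leq_ltn_trans ht hn.
move=> htq.
have : t < 2 * h.
  have : t * q < (2 * h) * q by apply: leq_trans htq _; nia.
  by rewrite ltn_pmul2r.
nia.
Qed.

Lemma arith1 lf v : 0 < v -> 28 * lf * (10 * v) + lf <= 300 * v * lf.
Proof. move=> v0; nia. Qed.

Lemma arith2 H h L lf : H <= 4 * h -> L <= 28 * lf -> 2 * H * L <= 300 * h * lf.
Proof. move=> h1 h2; nia. Qed.

Lemma arith3 c q K p D : c < D -> 6 * D <= p -> q * p <= K -> p <= K -> 3 * (c * (q + 1)) <= K.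
Proof. move=> h1 h2 h3 h4; nia. Qed.

Import GRing.Theory.
Local Open Scope ring_scope.

Section Enc.
Variables (n : nat) (S : finType) (bb : nat) (s0 : S) (hS : (#|S| <= 2 ^ bb)%N).
Definition enc (s : S) : 'I_(2 ^ bb) := widen_ord hS (enum_rank s).
Definition dec (x : 'I_(2 ^ bb)) : S := nth s0 (enum S) x.
Lemma encK : cancel enc dec.
Proof. by move=> s; rewrite /dec /enc /= nth_enum_rank. Qed.

Variables (ini : 'I_(2 ^ bb) -> S) (stp : S -> token n -> S) (hstp : S -> bool -> S) (ot : S -> option nat).
Definition mkV : verifier n :=
  @Verifier n bb (fun x => enc (ini x)) (fun x t => enc (stp (dec x) t))
    (fun x bt => enc (hstp (dec x) bt)) (fun x => ot (dec x)).

Lemma run_mkV x sigma h : run mkV x sigma h = ot (foldl hstp (foldl stp (ini x) sigma) h).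
Proof.
rewrite /run /=.
have e1 : forall s sg, foldl (fun x t => enc (stp (dec x) t)) (enc s) sg = enc (foldl stp s sg).
  by move=> s sg; elim: sg s => //= t sg IH s; rewrite encK IH.
have e2 : forall s sg, foldl (fun x t => enc (hstp (dec x) t)) (enc s) sg = enc (foldl hstp s sg).
  by move=> s sg; elim: sg s => //= t sg IH s; rewrite encK IH.
by rewrite e1 e2 encK.
Qed.
End Enc.

Lemma count_seeds p K (B : {set 'F_p}) : prime p ->
  (#|[set s : 'I_K | ((s : nat)%:R : 'F_p) \in B]| <= #|B| * (K %/ p + 1))%N.
Proof.
move=> pp.
set A := [set s : 'I_K | _].
pose f := fun s : 'I_K => (((s : nat)%:R : 'F_p), (inord (s %/ p) : 'I_(K %/ p).+1)).
have finj : injective f.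
  move=> x y [hx /(congr1 (@nat_of_ord _))].
  have lx : (x %/ p <= K %/ p)%N by apply: leq_div2r; apply: ltnW.
  have ly : (y %/ p <= K %/ p)%N by apply: leq_div2r; apply: ltnW.
  rewrite !inordK // => ed.
  have em : (x %% p = y %% p)%N.
    by rewrite -!val_Fp_nat // hx.
  by apply: val_inj; rewrite /= (divn_eq x p) (divn_eq y p) ed em.
rewrite -(card_in_imset (f := f) (D := A)); last by move=> x y _ _; apply: finj.
have sub : f @: A \subset setX B [set: 'I_(K %/ p).+1].
  apply/subsetP => z /imsetP [s sA ->]; rewrite !inE /= ?andbT.
  by move: sA; rewrite inE.
apply: (leq_trans (subset_leq_card sub)).
by rewrite cardsX cardsT card_ord addn1.
Qed.


Section Scheme.
Variables (n a1 b1 p L1 : nat).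
Local Notation a := a1.+1.
Local Notation b := b1.+1.
Local Notation L := L1.+1.
Local Notation F := 'F_p.

Definition cc : nat := (n %/ b + 1)%N.
Definition HH : nat := ((n %/ a + 1) * cc)%N.
Definition DD : nat := (2 * HH)%N.
Definition jw (w : 'I_n) : 'I_a := inord (w %% a).
Definition jx (x : 'I_n) : 'I_b := inord (x %% b).
Definition ix (w x : 'I_n) : nat := (w %/ a * cc + x %/ b)%N.
Definition ex (u w : 'I_n) : nat := (HH.-1 - ix u w)%N.
Definition d1 (r : F) (w : 'I_n) (j : 'I_a) : F := if jw w == j then r ^+ (w %/ a * cc) else 0.
Definition d2 (r : F) (x : 'I_n) (j : 'I_b) : F := if jx x == j then r ^+ (x %/ b) else 0.
Definition ea (r : F) (u w : 'I_n) (j : 'I_a * 'I_b) : F :=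
  if j == (jw u, jx w) then r ^+ ex u w else 0.

Record St := MkSt { rr : F; cur : option 'I_n; s1 : {ffun 'I_a -> F}; s2 : {ffun 'I_b -> F};
  al : {ffun 'I_a * 'I_b -> F}; be : {ffun 'I_a * 'I_b -> F};
  part : F; cnt : 'I_L; idx : 'I_DD.+2; acc : F; sav : F }.

Definition st2t (s : St) :=
  (rr s, cur s, s1 s, s2 s, al s, be s, part s, cnt s, idx s, acc s, sav s).
Definition t2st t : St :=
  let: (x1, x2, x3, x4, x5, x6, x7, x8, x9, x10, x11) := t in
  MkSt x1 x2 x3 x4 x5 x6 x7 x8 x9 x10 x11.
Lemma stK : cancel st2t t2st. Proof. by case. Qed.
HB.instance Definition _ := Equality.copy St (can_type stK).
HB.instance Definition _ := Choice.copy St (can_type stK).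
HB.instance Definition _ := Countable.copy St (can_type stK).
HB.instance Definition _ := Finite.copy St (can_type stK).

Definition norm (s : St) (u : 'I_n) : St :=
  if cur s == Some u then s else
  MkSt (rr s) (Some u) [ffun _ => 0] [ffun _ => 0] (al s) (be s) (part s) (cnt s) (idx s) (acc s) (sav s).

Definition upd (s : St) (u w : 'I_n) : St :=
  let r := rr s in
  let t1 := [ffun j => s1 s j + d1 r w j] in
  let t2 := [ffun j => s2 s j + d2 r w j] in
  MkSt r (cur s) t1 t2
   [ffun j => al s j + ea r u w j]
   [ffun j => be s j + (t1 j.1 * t2 j.2 - s1 s j.1 * s2 s j.2)]
   (part s) (cnt s) (idx s) (acc s) (sav s).

Definition sstep (s : St) (t : token n) : St := upd (norm s t.1) t.1 t.2.

Definition hf (s : St) := (part s, cnt s, idx s, acc s, sav s).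

Lemma norm_id s u : cur s = Some u -> norm s u = s.
Proof. by rewrite /norm => ->; rewrite eqxx. Qed.

Lemma cur_norm s u : cur (norm s u) = Some u.
Proof. by rewrite /norm; case: eqP. Qed.

Lemma normK s u : norm (norm s u) u = norm s u.
Proof. exact: norm_id (cur_norm s u). Qed.

Lemma inner_block s u l : cur s = Some u ->
  let s' := foldl sstep s [seq (u, w) | w <- l] in
  [/\ cur s' = Some u, rr s' = rr s, hf s' = hf s,
   (forall j, s1 s' j = s1 s j + \sum_(w <- l) d1 (rr s) w j) /\
   (forall j, s2 s' j = s2 s j + \sum_(w <- l) d2 (rr s) w j) &
   (forall j, al s' j = al s j + \sum_(w <- l) ea (rr s) u w j) /\
   (forall j, be s' j = be s j + (s1 s' j.1 * s2 s' j.2 - s1 s j.1 * s2 s j.2))].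
Proof.
elim: l s => [|w l IH] s cs /=.
  by split=> //; split=> j; rewrite ?big_nil ?addr0 ?subrr ?addr0.
have -> : sstep s (u, w) = upd s u w by rewrite /sstep /= norm_id.
have [c1 e1 h1 [q1 q2] [q3 q4]] := IH (upd s u w) cs.
split=> //; try split.
- by move=> j; rewrite q1 big_cons /= ffunE addrA.
- by move=> j; rewrite q2 big_cons /= ffunE addrA.
- by move=> j; rewrite q3 big_cons /= ffunE addrA.
- move=> j; rewrite q4 /= ffunE /= !ffunE.
  rewrite -addrA; congr (_ + _).
  by rewrite addrC addrA subrK addrC.
Qed.


Definition fresh s u := cur s = Some u -> (forall j, s1 s j = 0) /\ (forall j, s2 s j = 0).

Lemma block s u l : fresh s u ->
  let s' := foldl sstep s [seq (u, w) | w <- l] in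
  [/\ rr s' = rr s, hf s' = hf s, (cur s' = Some u \/ cur s' = cur s),
     forall j, al s' j = al s j + \sum_(w <- l) ea (rr s) u w j &
     forall j, be s' j = be s j + (\sum_(w <- l) d1 (rr s) w j.1) * (\sum_(w <- l) d2 (rr s) w j.2)].
Proof.
case: l => [|w l] fr /=.
  split; [done | done | by right | | ]; by move=> j; rewrite !big_nil ?mulr0 addr0.
have -> : sstep s (u, w) = sstep (norm s u) (u, w) by rewrite /sstep /= normK.
have [c1 e1 h1 [q1 q2] [q3 q4]] := inner_block (w :: l) (cur_norm s u).
have z1 : forall j, s1 (norm s u) j = 0.
  move=> j; rewrite /norm; case: eqP => [/fr [-> _]|] //=; by rewrite ffunE.
have z2 : forall j, s2 (norm s u) j = 0.
  move=> j; rewrite /norm; case: eqP => [/fr [_ ->]|] //=; by rewrite ffunE.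
have er : rr (norm s u) = rr s by rewrite /norm; case: eqP.
have eh : hf (norm s u) = hf s by rewrite /norm; case: eqP.
have ea' : al (norm s u) = al s by rewrite /norm; case: eqP.
have eb : be (norm s u) = be s by rewrite /norm; case: eqP.
rewrite /= in c1 e1 h1 q1 q2 q3 q4.
split.
- by rewrite e1 er.
- by rewrite h1 eh.
- by left.
- by move=> j; rewrite q3 ea' er.
- by move=> j; rewrite q4 q1 q2 !z1 !z2 eb er !add0r mulr0 subr0.
Qed.

Lemma blocks_run (B : seq ('I_n * seq 'I_n)) s : uniq (map fst B) ->
  (forall u, u \in map fst B -> cur s != Some u) ->
  let s' := foldl sstep s (flatten [seq [seq (bk.1, w) | w <- bk.2] | bk <- B]) in
  [/\ rr s' = rr s, hf s' = hf s,
    forall j, al s' j = al s j + \sum_(bk <- B) \sum_(w <- bk.2) ea (rr s) bk.1 w j &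
    forall j, be s' j = be s j + \sum_(bk <- B)
         (\sum_(w <- bk.2) d1 (rr s) w j.1) * (\sum_(w <- bk.2) d2 (rr s) w j.2)].
Proof.
elim: B s => [|[u l] B IH] s /=.
  by move=> _ _; split=> // j; rewrite big_nil addr0.
case/andP=> uB uqB hc.
rewrite foldl_cat.
have fr : fresh s u by move=> e; have := hc u; rewrite inE eqxx e eqxx => /(_ isT).
have [r1 h1 c1 a1' b1'] := block l fr.
set s1' := foldl sstep s _ in r1 h1 c1 a1' b1' *.
have hc' : forall u', u' \in map fst B -> cur s1' != Some u'.
  move=> u' u'B; case: c1 => ->.
    by apply/eqP => -[e]; move: uB; rewrite e u'B.
  by apply: hc; rewrite inE u'B orbT.
have [r2 h2 a2 b2] := IH s1' uqB hc'.
split.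
- by rewrite r2 r1.
- by rewrite h2 h1.
- by move=> j; rewrite a2 a1' big_cons r1 addrA.
- by move=> j; rewrite b2 b1' big_cons r1 addrA.
Qed.


Definition init (r : F) : St := MkSt r None [ffun _ => 0] [ffun _ => 0] [ffun _ => 0] [ffun _ => 0]
   0 ord0 ord0 0 0.

Definition alg (g : rel 'I_n) r j := \sum_(u : 'I_n) \sum_(w : 'I_n) (if g u w then ea r u w j else 0).
Definition beg (g : rel 'I_n) r (j : 'I_a * 'I_b) := \sum_(u : 'I_n)
  (\sum_(w : 'I_n) (if g u w then d1 r w j.1 else 0)) * (\sum_(x : 'I_n) (if g u x then d2 r x j.2 else 0)).

Lemma sum_list_g (g : rel 'I_n) u (l : seq 'I_n) (f : 'I_n -> F) : uniq l ->
  (forall w, (w \in l) = g u w) -> \sum_(w <- l) f w = \sum_w (if g u w then f w else 0).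
Proof.
move=> ul hl; rewrite big_uniq // big_mkcond; apply: eq_bigr => w _; by rewrite hl.
Qed.

Lemma sum_blocks (B : seq ('I_n * seq 'I_n)) (G : 'I_n -> F) :
  perm_eq (map fst B) (enum 'I_n) -> \sum_(bk <- B) G bk.1 = \sum_u G u.
Proof.
move=> hp; rewrite -(big_map fst xpredT G) (perm_big _ hp) big_enum /=.
by apply: eq_bigl => u; rewrite inE.
Qed.

Lemma stream_run g sigma r : adj_stream g sigma ->
  let s' := foldl sstep (init r) sigma in
  [/\ rr s' = r, hf s' = hf (init r), forall j, al s' j = alg g r j & forall j, be s' j = beg g r j].
Proof.
case=> B [hp hb ->].
have uq : uniq (map fst B) by rewrite (perm_uniq hp) enum_uniq.
have [r1 h1 a1' b1'] := blocks_run (s := init r) uq (fun u _ => isT).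
split=> //.
- move=> j; rewrite a1' /= ffunE add0r /alg.
  rewrite (eq_big_seq (fun bk => (fun u => \sum_w (if g u w then ea r u w j else 0)) bk.1)).
    exact: sum_blocks.
  by move=> bk /hb [ul hl]; apply: sum_list_g.
- move=> j; rewrite b1' /= ffunE add0r /beg.
  rewrite (eq_big_seq (fun bk => (fun u => (\sum_(w : 'I_n) (if g u w then d1 r w j.1 else 0)) *
       (\sum_(x : 'I_n) (if g u x then d2 r x j.2 else 0))) bk.1)).
    exact: sum_blocks.
  by move=> bk /hb [ul hl]; rewrite !(@sum_list_g g bk.1 bk.2 _ ul hl).
Qed.


Definition XP (c : bool) (m : nat) : {poly F} := if c then 'X^m else 0.
Definition Gp (g : rel 'I_n) (j : 'I_a * 'I_b) : {poly F} := \sum_(u : 'I_n)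
  (\sum_(w : 'I_n) XP (g u w && (jw w == j.1)) (w %/ a * cc)) *
  (\sum_(x : 'I_n) XP (g u x && (jx x == j.2)) (x %/ b)).
Definition Fp (g : rel 'I_n) (j : 'I_a * 'I_b) : {poly F} :=
  \sum_(u : 'I_n) \sum_(w : 'I_n) XP (g u w && (j == (jw u, jx w))) (ex u w).
Definition Pol (g : rel 'I_n) : {poly F} := \sum_j Fp g j * Gp g j.

Lemma hornerXP c m r : (XP c m).[r] = if c then r ^+ m else 0.
Proof. by case: c; rewrite /XP ?hornerXn ?horner0. Qed.

Lemma coefXP c m k : (XP c m)`_k = if c && (m == k) then 1 else 0.
Proof. case: c; rewrite /XP ?coef0 //= coefXn eq_sym; by case: (m == k). Qed.

Lemma XPM c1 c2 m1 m2 : XP c1 m1 * XP c2 m2 = XP (c1 && c2) (m1 + m2).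
Proof. by case: c1; case: c2; rewrite /XP ?mul0r ?mulr0 // exprD. Qed.

Lemma horner_Fp g j r : (Fp g j).[r] = alg g r j.
Proof.
rewrite /Fp /alg horner_sum; apply: eq_bigr => u _; rewrite horner_sum; apply: eq_bigr => w _.
by rewrite hornerXP /ea; case: (g u w); case: (j == _).
Qed.

Lemma horner_Gp g j r : (Gp g j).[r] = beg g r j.
Proof.
rewrite /Gp /beg horner_sum; apply: eq_bigr => u _; rewrite hornerM !horner_sum.
congr (_ * _); apply: eq_bigr => w _; rewrite hornerXP /d1 /d2;
  by case: (g u _); rewrite ?(eq_sym (jw _)) ?(eq_sym (jx _)).
Qed.

Lemma horner_Pol g r : (Pol g).[r] = \sum_j alg g r j * beg g r j.
Proof.
rewrite /Pol horner_sum; apply: eq_bigr => j _; by rewrite hornerM horner_Fp horner_Gp.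
Qed.

Lemma sum_pick (R : zmodType) (T : finType) (c : T) (f : T -> R) :
  \sum_(j : T) (if j == c then f j else 0) = f c.
Proof. by rewrite -big_mkcond big_pred1_eq. Qed.

Lemma PolE g : Pol g = \sum_u \sum_w (if g u w then 'X^(ex u w) * Gp g (jw u, jx w) else 0).
Proof.
rewrite /Pol /Fp.
under eq_bigr => j _ do rewrite mulr_suml.
rewrite exchange_big /=; apply: eq_bigr => u _.
under eq_bigr => j _ do rewrite mulr_suml.
rewrite exchange_big /=; apply: eq_bigr => w _.
rewrite -(sum_pick (jw u, jx w) (fun j => if g u w then 'X^(ex u w) * Gp g j else 0)).
apply: eq_bigr => j _; rewrite /XP; case: (g u w); case: (j == _) => //=; by rewrite mul0r.
Qed.

Lemma coef_Gp g j t : (Gp g j)`_t = \sum_u \sum_w \sum_x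
  (if [&& g u w && (jw w == j.1), g u x && (jx x == j.2) & ix w x == t] then 1 else 0).
Proof.
rewrite /Gp coef_sum; apply: eq_bigr => u _; rewrite big_distrlr coef_sum; apply: eq_bigr => w _.
rewrite coef_sum; apply: eq_bigr => x _ /=; rewrite XPM coefXP /ix.
by case: (g u w && _); case: (g u x && _).
Qed.

Lemma ix_lt w x : (ix w x < HH)%N.
Proof.
rewrite /ix /HH /cc.
have h1 : (w %/ a <= n %/ a)%N by apply: leq_div2r; apply: ltnW.
have h2 : (x %/ b <= n %/ b)%N by apply: leq_div2r; apply: ltnW.
nia.
Qed.

Lemma divmod_uniq A B A' B' c : (B < c)%N -> (B' < c)%N -> (A * c + B = A' * c + B')%N ->
  A = A' /\ B = B'.
Proof.
move=> hB hB' e.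
have c0 : (0 < c)%N by apply: leq_ltn_trans hB.
have e1 := congr1 (fun z => z %/ c)%N e; have e2 := congr1 (fun z => z %% c)%N e.
rewrite /= !divnMDl // !divn_small // !addn0 in e1.
by rewrite /= !modnMDl !modn_small in e2.
Qed.

Lemma key_inj u w w' x' : jw w' = jw u -> jx x' = jx w -> ix w' x' = ix u w -> w' = u /\ x' = w.
Proof.
move=> ew ex' ei.
have ew2 : (w' %% a = u %% a)%N.
  by have := congr1 (@nat_of_ord _) ew; rewrite /jw !inordK // ltn_pmod.
have ex2 : (x' %% b = w %% b)%N.
  by have := congr1 (@nat_of_ord _) ex'; rewrite /jx !inordK // ltn_pmod.
have lt1 : forall y : 'I_n, (y %/ b < cc)%N.
  move=> y; rewrite /cc addn1 ltnS; apply: leq_div2r; exact: ltnW.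
have [q1 q2] := divmod_uniq (lt1 x') (lt1 w) ei.
split; apply: val_inj => /=.
  by rewrite (divn_eq w' a) (divn_eq u a) q1 ew2.
by rewrite (divn_eq x' b) (divn_eq w b) q2 ex2.
Qed.


Lemma coef_Pol_high g k : (DD <= k)%N -> (Pol g)`_k = 0.
Proof.
move=> hk; rewrite PolE coef_sum big1 // => u _; rewrite coef_sum big1 // => w _.
case: (g u w); last by rewrite coef0.
rewrite coefXnM; case: ifP => // _.
rewrite coef_Gp big1 // => u' _; rewrite big1 // => w' _; rewrite big1 // => x' _.
have h1 := ix_lt w' x'; have h2 := ix_lt u w.
have -> : (ix w' x' == k - ex u w)%N = false.
  apply/negbTE; move: hk; rewrite /ex /DD; lia.
by rewrite !andbF.
Qed.

Lemma size_Pol g : (size (Pol g) <= DD)%N.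
Proof. by apply/leq_sizeP => k hk; apply: coef_Pol_high. Qed.

Lemma coef_Pol_mid g : (Pol g)`_(HH.-1) =
  (\sum_u \sum_w \sum_z ((g u w && g z u && g z w) : nat))%:R.
Proof.
rewrite PolE coef_sum natr_sum; apply: eq_bigr => u _.
rewrite coef_sum natr_sum; apply: eq_bigr => w _.
rewrite natr_sum.
case: (boolP (g u w)) => guw; last by rewrite coef0 big1 // => z _; rewrite (negbTE guw).
have h2 := ix_lt u w.
rewrite coefXnM ifF; last by rewrite /ex; apply/negbTE; lia.
have -> : (HH.-1 - ex u w = ix u w)%N by rewrite /ex; lia.
rewrite coef_Gp; apply: eq_bigr => z _.
have step : forall w' x', [&& g z w' && (jw w' == (jw u, jx w).1),
     g z x' && (jx x' == (jw u, jx w).2) & ix w' x' == ix u w] =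
     (w' == u) && ((x' == w) && (g z u && g z w)).
  move=> w' x'; apply/idP/idP.
    case/and3P=> /andP[gw /eqP e1] /andP[gx /eqP e2] /eqP e3.
    have [e4 e5] := key_inj e1 e2 e3; subst w' x'.
    by rewrite !eqxx gw gx.
  by case/andP=> /eqP -> /andP[/eqP -> /andP[-> ->]]; rewrite !eqxx.
under eq_bigr => w' _ do under eq_bigr => x' _ do rewrite step.
have e : forall w', \sum_x' (if (w' == u) && ((x' == w) && (g z u && g z w)) then 1 else 0 : F) =
   if w' == u then (if g z u && g z w then 1 else 0) else 0.
  move=> w'; case: (w' == u) => /=; last by rewrite big1.
  rewrite -(@sum_pick _ _ w (fun _ => if g z u && g z w then 1 else 0)).
  by apply: eq_bigr => x' _; case: (x' == w).
under eq_bigr => w' _ do rewrite e.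
rewrite (@sum_pick _ _ u (fun _ => if g z u && g z w then 1 else 0)) /=. 
by case: (g z u && g z w).
Qed.


Definition hstep (s : St) (bt : bool) : St :=
  let pt := part s * 2%:R + (bt : nat)%:R in
  if ((cnt s).+1 == L)%N then
    MkSt (rr s) (cur s) (s1 s) (s2 s) (al s) (be s) 0 ord0 (inord (minn (idx s).+1 DD.+1))
      (acc s * rr s + pt) (if (idx s == HH :> nat) then pt else sav s)
  else MkSt (rr s) (cur s) (s1 s) (s2 s) (al s) (be s) pt (inord (cnt s).+1) (idx s) (acc s) (sav s).

Definition out (s : St) : option nat :=
  if [&& (cnt s == 0 :> nat), (idx s == DD :> nat) & acc s == \sum_j al s j * be s j]
  then Some ((sav s : nat) %/ 6)%N else None.

Record SH := MkSH { hp : F; hc : nat; hk : nat; hq : {poly F}; hs : F }.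

Definition hsym (y : SH) (bt : bool) : SH :=
  let pt := hp y * 2%:R + (bt : nat)%:R in
  if ((hc y).+1 == L)%N then MkSH 0 0 (hk y).+1 (cons_poly pt (hq y)) (if (hk y == HH)%N then pt else hs y)
  else MkSH pt (hc y).+1 (hk y) (hq y) (hs y).

Definition Rel (s : St) (y : SH) := [/\ part s = hp y, (cnt s : nat) = hc y,
  (idx s : nat) = minn (hk y) DD.+1, acc s = (hq y).[rr s] & sav s = hs y].

Definition Inv (y : SH) := [/\ (hc y < L)%N, (size (hq y) <= hk y)%N &
  ((HH < hk y)%N -> hs y = (hq y)`_(hk y - 1 - HH))].

Lemma HH_le_DD : (HH <= DD)%N. Proof. rewrite /DD; lia. Qed.
Lemma HH_pos : (0 < HH)%N. Proof. by rewrite /HH /cc muln_gt0 !addn1. Qed.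

Lemma step_rel s y bt : Inv y -> Rel s y ->
  [/\ Inv (hsym y bt), Rel (hstep s bt) (hsym y bt), rr (hstep s bt) = rr s,
     al (hstep s bt) = al s & be (hstep s bt) = be s].
Proof.
case=> i1 i2 i3 [r1 r2 r3 r4 r5].
have hD := HH_le_DD.
rewrite /hstep /hsym r2 r1; case: ifP => /eqP hL; split => //.
- split => //=.
  + by rewrite size_cons_poly; case: ifP => _ //; rewrite ltnS.
  + move=> hk; case: ifP => [/eqP e|/negbT e].
      rewrite e; have -> : (HH.+1 - 1 - HH = 0)%N by lia.
      by rewrite coef_cons.
    rewrite coef_cons ifF; last by move: hk e; lia.
    rewrite i3; last by move: hk e; lia.
    congr (_`_ _); move: hk e; lia.
- split => //=.
  + rewrite inordK; last by lia.
    by rewrite r3; lia.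
  + by rewrite r4 horner_cons.
  + have E : (minn (hk y) DD.+1 == HH) = (hk y == HH) by apply/eqP/eqP; lia.
    by rewrite r3 E r5.
- by split => //=; lia.
- by split => //=; rewrite inordK //; lia.
Qed.

Lemma run_rel bits s y : Inv y -> Rel s y ->
  let s' := foldl hstep s bits in let y' := foldl hsym y bits in
  [/\ Inv y', Rel s' y', rr s' = rr s, al s' = al s & be s' = be s].
Proof.
elim: bits s y => [|bt bits IH] s y iy rsy //=.
have [i' r' e1 e2 e3] := step_rel bt iy rsy.
have [j1 j2 j3 j4 j5] := IH _ _ i' r'.
by split => //; rewrite ?j3 ?j4 ?j5.
Qed.

Definition valF (bs : seq bool) : F := foldl (fun (x : F) (bt : bool) => x * 2%:R + (nat_of_bool bt)%:R) 0 bs.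

Fixpoint bitsr (k m : nat) : seq bool :=
  if k is k'.+1 then rcons (bitsr k' m./2) (odd m) else [::].

Lemma size_bitsr k m : size (bitsr k m) = k.
Proof. by elim: k m => //= k IH m; rewrite size_rcons IH. Qed.

Lemma valF_bitsr k m : (m < 2 ^ k)%N -> valF (bitsr k m) = m%:R.
Proof.
elim: k m => [|k IH] m /=.
  by rewrite expn0 ltnS leqn0 => /eqP ->.
move=> hm; rewrite /valF foldl_rcons -/(valF _) IH; last first.
  by rewrite expnS in hm; rewrite -divn2; lia.
by rewrite -natrM -natrD muln2 addnC odd_double_half.
Qed.

Lemma partial_sym bs k q sv : (size bs < L)%N ->
  foldl hsym (MkSH 0 0 k q sv) bs = MkSH (valF bs) (size bs) k q sv.
Proof.
elim/last_ind: bs => [|bs bt IH] //= hs'.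
rewrite size_rcons in hs'.
rewrite foldl_rcons IH; last by lia.
rewrite /hsym /= ifF; last by apply/negbTE; lia.
by rewrite /valF foldl_rcons size_rcons.
Qed.

Lemma chunk_sym m k q sv : (m < 2 ^ L)%N ->
  foldl hsym (MkSH 0 0 k q sv) (bitsr L m) =
  MkSH 0 0 k.+1 (cons_poly m%:R q) (if (k == HH)%N then m%:R else sv).
Proof.
move=> hm; rewrite [bitsr _ _]/= foldl_rcons partial_sym ?size_bitsr //.
rewrite /hsym /= eqxx.
have <- : valF (bitsr L m) = m%:R by apply: valF_bitsr.
by rewrite /valF [bitsr L m]/= foldl_rcons.
Qed.

Definition hon (cs : seq F) : seq bool := flatten [seq bitsr L (nat_of_ord c) | c <- cs].

Lemma honest_sym (cs : seq F) k q sv : (forall c : F, nat_of_ord c < 2 ^ L)%N ->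
  exists sv', foldl hsym (MkSH 0 0 k q sv) (hon cs) =
    MkSH 0 0 (k + size cs) (foldl (fun q c => cons_poly c q) q cs) sv'.
Proof.
move=> hc; elim: cs k q sv => [|c cs IH] k q sv /=; first by exists sv; rewrite addn0.
rewrite /hon /= foldl_cat -/(hon cs) chunk_sym // natr_Zp.
have [sv' ->] := IH k.+1 (cons_poly c q) (if (k == HH)%N then c else sv).
by exists sv'; rewrite addSnnS.
Qed.

Lemma size_hon cs : size (hon cs) = (size cs * L)%N.
Proof.
elim: cs => // c cs IH; rewrite /hon map_cons.
have -> : forall (x : seq bool) xs, flatten (x :: xs) = x ++ flatten xs by [].
by rewrite size_cat size_bitsr -/(hon cs) IH mulSn.
Qed.


Lemma Poly_fold (cs : seq F) : foldl (fun q c => cons_poly c q) 0 (rev cs) = Poly cs.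
Proof. by rewrite foldl_rev /Poly polyC0. Qed.

Lemma Poly_mkseq (P : {poly F}) : (size P <= DD)%N -> Poly (mkseq (fun i => P`_i) DD) = P.
Proof.
move=> hs; apply/polyP => i; rewrite coef_Poly.
case: (ltnP i DD) => hi; first by rewrite nth_mkseq.
rewrite nth_default ?size_mkseq //.
by move/leq_sizeP: hs => ->.
Qed.

Definition gs (sigma : seq (token n)) : rel 'I_n := fun u w => (u, w) \in sigma.

Lemma gs_eq g sigma : adj_stream g sigma -> forall u w, gs sigma u w = g u w.
Proof.
case=> B [hp hb ->] u w; rewrite /gs; apply/idP/idP.
  case/flattenP => l /mapP [bk bkB ->] /mapP [w' w'in [-> ->]].
  by have [_ <-] := hb bk bkB.
move=> guw.
have : u \in map fst B by rewrite (perm_mem hp) mem_enum.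
case/mapP => bk bkB eu; apply/flattenP; exists [seq (bk.1, w0) | w0 <- bk.2].
  by apply/mapP; exists bk.
apply/mapP; exists w => //; last by rewrite eu.
by have [_ ->] := hb bk bkB; rewrite -eu.
Qed.

Lemma Pol_gs g sigma : adj_stream g sigma -> Pol (gs sigma) = Pol g.
Proof.
move=> h; have e : gs sigma = g.
  by apply: FunctionalExtensionality.functional_extensionality => u;
     apply: FunctionalExtensionality.functional_extensionality => w; apply: gs_eq.
by rewrite e.
Qed.

Definition hcs (P : {poly F}) : seq F := rev (mkseq (fun i => P`_i) DD).
Definition Phon (sigma : seq (token n)) : seq bool := hon (hcs (Pol (gs sigma))).

Definition y0 : SH := MkSH 0 0 0 0 0.

Lemma out_char g sigma r bits : adj_stream g sigma ->
  let y' := foldl hsym y0 bits in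
  Inv y' /\
  out (foldl hstep (foldl sstep (init r) sigma) bits) =
  if [&& hc y' == 0%N, hk y' == DD & (hq y').[r] == (Pol g).[r]] then Some ((hs y' : nat) %/ 6)%N
  else None.
Proof.
move=> adj /=.
have [e1 e2 e3 e4] := stream_run r adj.
set s1 := foldl sstep (init r) sigma in e1 e2 e3 e4 *.
have R0 : Rel s1 y0.
  rewrite /Rel; move: e2; rewrite /hf /= => -[-> -> -> -> ->].
  split => //=; first by rewrite horner0.
have I0 : Inv y0 by split => //=; rewrite size_poly0.
have [I' [q1 q2 q3 q4 q5] f1 f2 f3] := run_rel bits I0 R0.
split => //.
rewrite /out q2 q3 q4 q5 f1 f2 f3 e1 horner_Pol.
have -> : \sum_j al s1 j * be s1 j = \sum_j alg g r j * beg g r j.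
  by apply: eq_bigr => j _; rewrite e3 e4.
by congr (if _ then _ else _); congr (_ && (_ && _)); apply/eqP/eqP; lia.
Qed.

Lemma six_T g (pp : prime p) : simple_graph g -> (6 * triangle_count g < p)%N ->
  (nat_of_ord ((Pol g)`_(HH.-1))%R %/ 6)%N = triangle_count g.
Proof.
move=> sg hp; rewrite coef_Pol_mid (tri6 sg) val_Fp_nat // modn_small //.
by rewrite mulKn.
Qed.

Lemma good_out g y : simple_graph g -> prime p -> (6 * triangle_count g < p)%N ->
  Inv y -> hk y = DD -> hq y = Pol g -> (nat_of_ord (hs y) %/ 6)%N = triangle_count g.
Proof.
move=> sg pp hp [_ _ i3] hk hq.
have hpos := HH_pos; rewrite i3 hk ?hq; last by rewrite /DD; lia.
have -> : (DD - 1 - HH = HH.-1)%N by rewrite /DD; lia.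
exact: six_T.
Qed.

Theorem complete_abs g sigma r : prime p -> (p <= 2 ^ L)%N -> simple_graph g -> adj_stream g sigma ->
  (6 * triangle_count g < p)%N ->
  out (foldl hstep (foldl sstep (init r) sigma) (Phon sigma)) = Some (triangle_count g).
Proof.
move=> pp pL sg adj hp.
have [I' ->] := out_char r (Phon sigma) adj.
have hc : forall c : F, (nat_of_ord c < 2 ^ L)%N.
  move=> c; apply: leq_trans pL.
  have e := val_Fp_nat pp (nat_of_ord c); rewrite natr_Zp in e.
  by rewrite e ltn_pmod // prime_gt0.
have [sv' e] := honest_sym (hcs (Pol (gs sigma))) 0 0 0 hc.
rewrite /y0 /Phon e in I' *.
rewrite /hcs Poly_fold Poly_mkseq ?size_Pol // (Pol_gs adj) in I' *.
rewrite size_rev size_mkseq add0n /= !eqxx /=.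
have hk' : hk (MkSH 0 0 (0 + size (rev (mkseq (fun i => (Pol g)`_i) DD))) (Pol g) sv') = DD.
  by rewrite /= size_rev size_mkseq.
by rewrite (good_out sg pp hp I' hk').
Qed.

Lemma size_Phon sigma : size (Phon sigma) = (DD * L)%N.
Proof. by rewrite /Phon size_hon /hcs size_rev size_mkseq. Qed.

Theorem sound_abs g sigma bits : prime p -> simple_graph g -> adj_stream g sigma ->
  (6 * triangle_count g < p)%N ->
  exists B : {set F}, (#|B| < DD)%N /\ forall r,
    out (foldl hstep (foldl sstep (init r) sigma) bits) != None ->
    out (foldl hstep (foldl sstep (init r) sigma) bits) != Some (triangle_count g) -> r \in B.
Proof.
move=> pp sg adj hp.
set y' := foldl hsym y0 bits.
have I' : Inv y' by have [] := out_char 0 bits adj.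
case: (boolP ((hk y' == DD) && (hq y' != Pol g))) => cond.
  case/andP: cond => /eqP hk nz.
  exists [set r | root (hq y' - Pol g) r]; split.
    have nz' : hq y' - Pol g != 0 by rewrite subr_eq0.
    have := max_poly_roots nz' (rs := enum [set r | root (hq y' - Pol g) r]).
    rewrite enum_uniq => h.
    have hall : all (root (hq y' - Pol g)) (enum [set r | root (hq y' - Pol g) r]).
      by apply/allP => r; rewrite mem_enum inE.
    rewrite cardE; apply: (leq_trans (h hall isT)); apply: (leq_trans (size_add _ _)).
    rewrite size_opp geq_max size_Pol andbT.
    by case: I' => _ s _; rewrite -hk.
  move=> r; have [_ ->] := out_char r bits adj; rewrite -/y'.
  case: ifP => // /and3P [_ _ /eqP e] _ _.
  by rewrite inE /root hornerD hornerN e subrr.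
exists set0; split; first by have := HH_pos; rewrite cards0 /DD; lia.
move=> r; have [_ ->] := out_char r bits adj; rewrite -/y'.
case: ifP => // /and3P [_ /eqP hk _] _.
move: cond; rewrite hk eqxx /= negbK => /eqP eQ.
by rewrite (good_out sg pp hp I' hk eQ) eqxx.
Qed.


Lemma card_St : (#|{: St}| <= #|F| * n.+1 * #|F| ^ a * #|F| ^ b * #|F| ^ (a * b) * #|F| ^ (a * b)
   * #|F| * L * DD.+2 * #|F| * #|F|)%N.
Proof.
have := leq_card st2t (can_inj stK).
by rewrite !card_prod !card_ffun !card_option !card_prod !card_ord.
Qed.

End Scheme.

Local Close Scope ring_scope.

Lemma tc_zero (g : rel 'I_0) : triangle_count g = 0.
Proof.
rewrite /triangle_count; apply/eqP; rewrite cards_eq0; apply/eqP/setP => t; rewrite !inE.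
have := max_card (mem t); rewrite card_ord leqn0 => /eqP ->.
by [].
Qed.

Theorem theorem4p6 :
  exists C k : nat, forall n h v : nat, n ^ 2 <= h * v ->
    exists (V : verifier n) (P : seq (token n) -> seq bool),
      [/\ tc_scheme V P,
          vbits V <= C * v * logf n ^ k
        & forall g sigma, simple_graph g -> adj_stream g sigma ->
            size (P sigma) <= C * h * logf n ^ k].
Proof.
exists 300, 1 => n h v hnv; rewrite expn1.
case: (posnP n) => [n0 | npos].
  subst n.
  exists (@Verifier 0 0 id (fun x _ => x) (fun x _ => x) (fun _ => Some 0)), (fun _ => [::]).
  split => //; split => g sigma _ _.
    by move=> r; rewrite /run tc_zero.
  move=> hlp; rewrite (_ : [set r | _] = set0) ?cards0 //.
  by apply/setP => r; rewrite !inE /run tc_zero eqxx andbF.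
move: hnv; rewrite -mulnn => hnv.
have v0 : 0 < v by case: v hnv => //; rewrite muln0; lia.
have h0 : 0 < h by case: h hnv => //; rewrite mul0n; lia.
set lf := logf n.
have nlf : n < 2 ^ lf by rewrite /lf /logf; apply: trunc_log_ltn.
have lf1 : 0 < lf by [].
set s := 6 + 3 * lf.
have [p pp /andP[hp1 hp2]] := @prime_between s (ltac:(lia)).
set L1 := 3 * s.
set a := minn v n.
have a0 : 0 < a by rewrite /a leq_min v0 npos.
set b := minn (v %/ a) n.
have b0 : 0 < b by rewrite /b leq_min npos divn_gt0 // geq_minl.
set a1 := a.-1; set b1 := b.-1.
have ea : a1.+1 = a by rewrite /a1 prednK.
have eb : b1.+1 = b by rewrite /b1 prednK.
have HHb : HH n a1 b1 <= 4 * h.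
  by rewrite /HH /cc ea eb; apply: HH_bound npos hnv.
have HHn : HH n a1 b1 <= n.+1 * n.+1.
  rewrite /HH /cc ea eb; apply: leq_mul; rewrite addn1 ltnS; exact: leq_div.
set X := 2 ^ lf.
have X1 : n.+1 <= X by [].
have eL : 2 ^ L1.+1 = 2 ^ 19 * X ^ 9 by rewrite /L1 /s /X -expnM -expnD; congr (_ ^ _); lia.
have es : 2 ^ s = 2 ^ 6 * X ^ 3 by rewrite /s /X -expnM -expnD mulnC.
have X3 : n ^ 3 < X ^ 3 by rewrite ltn_exp2r.
set Y := 2 ^ L1.+1.
have XY : X * X * 16 <= Y.
  rewrite /Y eL.
  have : X * X <= X ^ 9 by rewrite mulnn leq_pexp2l // expn_gt0.
  nia.
have LY : L1.+1 <= Y by apply: ltnW; apply: ltn_expl.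
have DY : (DD n a1 b1).+2 <= Y by rewrite /DD; nia.
have pY : p <= Y by [].
have p6 : forall g : rel 'I_n, simple_graph g -> 6 * triangle_count g < p.
  move=> g sg; have := tri_le sg; rewrite es in hp1; nia.
have XX : n.+1 * n.+1 <= X * X by apply: leq_mul.
have pD : 6 * DD n a1 b1 <= p.
  have : X * X <= X ^ 3 by rewrite mulnn leq_pexp2l // expn_gt0.
  rewrite es in hp1; rewrite /DD; lia.
set bb := L1.+1 * (2 * (a * b) + a + b + 6) + lf.
have hS : #|{: St n a1 b1 p L1}| <= 2 ^ bb.
  apply: (leq_trans (card_St _ _ _ _ _)); rewrite card_Fp // ea eb.
  apply: (@leq_trans (Y * X * Y ^ a * Y ^ b * Y ^ (a * b) * Y ^ (a * b) * Y * Y * Y * Y * Y)).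
    by repeat apply: leq_mul => //; apply: exp_mono.
  rewrite /Y /X -!expnM -!expnD leq_exp2l //.
  by rewrite /bb !mulnDr mulnCA; lia.
pose ini := fun x : 'I_(2 ^ bb) => init n a1 b1 L1 ((x : nat)%:R : 'F_p)%R.
exists (mkV (init n a1 b1 L1 0%R) hS ini (@sstep n a1 b1 p L1) (@hstep n a1 b1 p L1) (@out n a1 b1 p L1)).
exists (Phon a1 b1 p L1).
have eL1 : L1.+1 <= 28 * lf by rewrite /L1 /s; lia.
have hab : a * b <= v.
  apply: (@leq_trans (a * (v %/ a))); first by apply: leq_mul => //; exact: geq_minl.
  by rewrite mulnC leq_divM.
have ha : a <= v by exact: geq_minl.
have hb : b <= v by apply: (leq_trans (geq_minl _ _)); exact: leq_div.
have hbb : bb <= 300 * v * lf.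
  have h1 : 2 * (a * b) + a + b + 6 <= 10 * v by lia.
  have h2 : L1.+1 * (2 * (a * b) + a + b + 6) <= (28 * lf) * (10 * v) by apply: leq_mul.
  rewrite /bb; apply: (leq_trans (leq_add h2 (leqnn lf))).
  exact: arith1.
split.
- split.
    by move=> g sigma sg adj r; rewrite run_mkV; apply: complete_abs => //; apply: p6.
  move=> g sigma sg adj hlp.
  have [B [hB hr]] := sound_abs a1 b1 L1 hlp pp sg adj (p6 g sg).
  set V := mkV _ _ _ _ _ _.
  have sub : [set r : 'I_(2 ^ bb) | (run V r sigma hlp != None) &&
       (run V r sigma hlp != Some (triangle_count g))]
       \subset [set x : 'I_(2 ^ bb) | ((x : nat)%:R : 'F_p)%R \in B].
    apply/subsetP => x; rewrite !inE !run_mkV => /andP [h1 h2]; exact: hr.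
  have hc := count_seeds (2 ^ bb) B pp.
  have hsub := subset_leq_card sub.
  have pK : p <= 2 ^ bb.
    apply: (leq_trans hp2); rewrite leq_exp2l // /bb.
    by apply: (leq_trans _ (leq_addr _ _)); apply: leq_pmulr; rewrite addn_gt0 orbT.
  have qK : 2 ^ bb %/ p * p <= 2 ^ bb by apply: leq_divM.
  have := arith3 hB pD qK pK.
  move=> h3; apply: leq_trans h3; rewrite leq_mul2l /=.
  exact: leq_trans hsub hc.
- by [].
- move=> g sigma _ _; rewrite size_Phon /DD.
  exact: arith2.
Qed.
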